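(* Let $p\ge5$ be a prime. Then \[ \sum_{j=2}^{p-3}B_j\equiv-\frac32\pmod p . \]
   Context: $B_j$ is the $j$th Bernoulli number ($\frac{t}{e^t-1}=\sum_{m\ge0}B_m\frac{t^m}{m!}$). For rationals whose denominators are coprime to $p$, $a\equiv b\pmod p$ means $a-b$ is $p$ times a rational with denominator coprime to $p$. *)

(* Defs.v *)
From mathcomp Require Import all_boot all_order all_algebra.
Set Implicit Arguments. Unset Strict Implicit. Unset Printing Implicit Defensive.
Import Order.TTheory GRing.Theory Num.Theory.
Local Open Scope ring_scope.

(* Bernoulli numbers B_m with generating function t/(e^t-1) (so B_1 = -1/2),
   defined by the equivalent standard recurrence
   B_0 = 1, sum_{k=0}^{m} C(m+1,k) B_k = 0 for m >= 1. *)
Fixpoint bern_seq (n : nat) : seq rat :=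
  match n with
  | 0%N => [:: 1]
  | m.+1 =>
      let s := bern_seq m in
      rcons s (- ((m.+2)%:R)^-1 *
                 \sum_(k < m.+1) ('C(m.+2, k))%:R * nth 0 s k)
  end.

Definition bernoulli (m : nat) : rat := nth 0 (bern_seq m) m.

Definition rat_congr (p : nat) (a b : rat) : Prop :=
  exists r : rat, coprime `|denq r|%N p /\ a - b = p%:R * r.

(* Main.v *)
Require Import Defs.
From mathcomp Require Import all_boot all_order all_algebra.
From mathcomp Require Import ring lra zify.
Import Order.TTheory GRing.Theory Num.Theory.
Local Open Scope ring_scope.

Lemma size_bern n : size (bern_seq n) = n.+1.
Proof. by elim: n => //= n IH; rewrite size_rcons IH. Qed.

Lemma nth_bern n k : (k <= n)%N -> nth 0 (bern_seq n) k = bernoulli k.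
Proof.
elim: n k => [|n IH] k hk; first by case: k hk.
rewrite leq_eqVlt in hk; case/orP: hk => [/eqP -> //|hk].
by rewrite /= nth_rcons size_bern hk IH.
Qed.

Lemma bern_rec m : bernoulli m.+1 =
  - ((m.+2)%:R)^-1 * \sum_(k < m.+1) ('C(m.+2, k))%:R * bernoulli k.
Proof.
rewrite /bernoulli /= nth_rcons size_bern ltnn eqxx; congr (_ * _).
by apply: eq_bigr => k _; rewrite nth_bern // -ltnS.
Qed.

Lemma bern_rec0 m : \sum_(k < m.+2) ('C(m.+2, k))%:R * bernoulli k = 0.
Proof.
rewrite big_ord_recr /= bern_rec binSn mulrA mulrN mulfV ?pnatr_eq0 //.
by rewrite mulN1r addrN.
Qed.

Lemma bern0 : bernoulli 0 = 1. Proof. by []. Qed.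
Lemma bern1 : bernoulli 1 = - (2%:R)^-1.
Proof. by rewrite bern_rec big_ord1 bern0 /= mulr1. Qed.

Definition eqN (N : nat) (p q : {poly rat}) := forall i, (i < N)%N -> p`_i = q`_i.

Lemma eqN_mull N p p' q : eqN N p p' -> eqN N (p * q) (p' * q).
Proof.
move=> h i hi; rewrite !coefM; apply: eq_bigr => j _; rewrite h //.
by apply: leq_ltn_trans hi; rewrite -ltnS.
Qed.

Lemma eqN_mulr N p q q' : eqN N q q' -> eqN N (p * q) (p * q').
Proof. by move=> h; rewrite ![p * _]mulrC; apply: eqN_mull. Qed.

Lemma eqN_trans N p q r : eqN N p q -> eqN N q r -> eqN N p r.
Proof. by move=> h1 h2 i hi; rewrite h1 // h2. Qed.

Lemma eqN_sym N p q : eqN N p q -> eqN N q p.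
Proof. by move=> h i hi; rewrite h. Qed.

Definition sgnp N (p : {poly rat}) := \poly_(i < N) ((-1) ^+ i * p`_i).

Lemma sgnp_mul N p q : eqN N (sgnp N p * sgnp N q) (sgnp N (p * q)).
Proof.
move=> i hi; rewrite coef_poly hi !coefM mulr_sumr; apply: eq_bigr => j _.
have hj : (j <= i)%N by rewrite -ltnS.
rewrite !coef_poly (leq_ltn_trans hj hi) (leq_ltn_trans (leq_subr j i) hi).
have -> : ((-1) ^+ i = (-1) ^+ j * (-1) ^+ (i - j) :> rat) by rewrite -exprD subnKC.
ring.
Qed.

Lemma sgnp_one N p : eqN N p 1 -> eqN N (sgnp N p) 1.
Proof.
move=> h i hi; rewrite coef_poly hi h // coef1.
by case: i hi => [|i] _ /=; rewrite ?mulr1 ?mulr0.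
Qed.

Lemma fact_neq0 n : ((n`!)%:R : rat) != 0.
Proof. by rewrite pnatr_eq0 -lt0n fact_gt0. Qed.

Lemma binq n j : (j <= n)%N ->
  ((j`!)%:R^-1 * ((n - j)`!)%:R^-1 : rat) = ('C(n, j))%:R / (n`!)%:R.
Proof.
move=> hj; rewrite -(bin_fact hj) !natrM.
have hC : ('C(n, j)%:R : rat) != 0 by rewrite pnatr_eq0 -lt0n bin_gt0.
have h1 := fact_neq0 j; have h2 := fact_neq0 (n - j).
by field; rewrite h1 h2 hC.
Qed.

Definition Bp N := \poly_(i < N) (bernoulli i / (i`!)%:R).
Definition Ep N := \poly_(i < N) (((i.+1)`!)%:R)^-1 : {poly rat}.
Definition E1 N := \poly_(i < N) ((i`!)%:R)^-1 : {poly rat}.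

Lemma BE N : eqN N (Bp N * Ep N) 1.
Proof.
move=> i hi; rewrite coefM coef1.
transitivity (((i.+1)`!)%:R^-1 * \sum_(j < i.+1) ('C(i.+1, j))%:R * bernoulli j).
  rewrite mulr_sumr; apply: eq_bigr => -[j hj] _ /=.
  have hj' : (j <= i)%N by rewrite -ltnS.
  rewrite !coef_poly (leq_ltn_trans hj' hi) (leq_ltn_trans (leq_subr j i) hi).
  rewrite -subSn //; have := binq _ _ (leqW hj'); move=> hb.
  rewrite -mulrA hb; ring.
case: i hi => [|m] _; first by rewrite big_ord1 /= bern0 !mulr1 ?invr1.
by rewrite bern_rec0 mulr0.
Qed.

Lemma altbin n : \sum_(j < n.+1) (-1) ^+ j * ('C(n.+1, j.+1))%:R = 1 :> rat.
Proof.
have := exprBn (1 : rat) 1 n.+1; rewrite subrr expr0n /= big_ord_recl /=.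
under eq_bigr do rewrite !expr1n !mulr1.
rewrite expr0 mulr1n !expr1n !mulr1 => h.
have -> : \sum_(j < n.+1) (-1) ^+ j * ('C(n.+1, j.+1))%:R =
   - \sum_(i < n.+1) (-1) ^+ bump 0 i *+ 'C(n.+1, bump 0 i) :> rat.
  rewrite -sumrN; apply: eq_bigr => j _.
  by rewrite /bump /= exprS mulN1r mulr_natr mulNrn opprK.
by rewrite -(addKr 1 (\sum_(i < n.+1) _)) -h subr0.
Qed.

Lemma EmE1 N : eqN N (sgnp N (Ep N) * E1 N) (Ep N).
Proof.
move=> i hi; rewrite coefM coef_poly hi.
transitivity ((((i.+1)`!)%:R^-1 : rat) * \sum_(j < i.+1) (-1) ^+ j * ('C(i.+1, j.+1))%:R).
  rewrite mulr_sumr; apply: eq_bigr => -[j hj] _ /=.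
  have hj' : (j <= i)%N by rewrite -ltnS.
  rewrite !coef_poly (leq_ltn_trans hj' hi) (leq_ltn_trans (leq_subr j i) hi).
  have := binq _ _ (hj' : (j.+1 <= i.+1)%N); rewrite subSS => hb.
  rewrite -mulrA hb; ring.
by rewrite altbin mulr1.
Qed.

Lemma E1X N : eqN N (E1 N) (1 + 'X * Ep N).
Proof.
move=> i hi; rewrite coefD coef1 coefXM !coef_poly hi.
case: i hi => [|m] hi /=; first by rewrite invr1 addr0.
by rewrite (ltnW hi) add0r.
Qed.

Lemma Xshift N p : eqN N p 1 -> eqN N.+1 ('X * p) 'X.
Proof.
move=> h i hi; rewrite coefXM coefX.
by case: i hi => //= i hi; rewrite h // coef1.
Qed.

Lemma eqN_le N M p q : (M <= N)%N -> eqN N p q -> eqN M p q.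
Proof. by move=> hM h i hi; apply: h; apply: leq_trans hM. Qed.

Lemma key N : eqN N (sgnp N (Bp N)) (Bp N + 'X).
Proof.
set Bm := sgnp N (Bp N).
have h1 : eqN N (sgnp N (Bp N) * sgnp N (Ep N)) 1.
  apply: eqN_trans (sgnp_mul _ _ _) _; apply: sgnp_one; exact: BE.
apply: (@eqN_trans _ _ (Bm * (Ep N * Bp N))).
  rewrite -[X in eqN _ X _]mulr1; apply: eqN_mulr; apply: eqN_sym.
  by rewrite mulrC; apply: BE.
have -> : Bm * (Ep N * Bp N) = Ep N * (Bm * Bp N) by ring.
apply: (@eqN_trans _ _ ((sgnp N (Ep N) * E1 N) * (Bm * Bp N))).
  by apply: eqN_mull; apply: eqN_sym; apply: EmE1.
have -> : (sgnp N (Ep N) * E1 N) * (Bm * Bp N) =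
   (Bm * sgnp N (Ep N)) * (E1 N * Bp N) by ring.
apply: (@eqN_trans _ _ (1 * (E1 N * Bp N))); first by apply: eqN_mull.
rewrite mul1r; apply: (@eqN_trans _ _ ((1 + 'X * Ep N) * Bp N)).
  by apply: eqN_mull; apply: E1X.
rewrite mulrDl mul1r -mulrA => i hi; rewrite !coefD; congr (_ + _).
by rewrite [Ep N * _]mulrC; apply: (Xshift _ _ (BE N)); apply: ltnW.
Qed.

Lemma bern_odd n : odd n -> (1 < n)%N -> bernoulli n = 0.
Proof.
move=> ho hn; have := key n.+1 n (ltnSn n).
rewrite !coef_poly coefD coefX ltnSn coef_poly ltnSn.
have -> : (n == 1%N) = false by case: n ho hn => [|[|]].
rewrite addr0 -signr_odd ho expr1 mulN1r => /eqP.
rewrite eq_sym -subr_eq0 opprK -mulrDl mulf_eq0 invr_eq0.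
rewrite (negbTE (fact_neq0 n)) orbF -mulr2n mulrn_eq0 /=.
by move/eqP.
Qed.

Definition PI (p : nat) (r : rat) := exists d : nat,
  [/\ (0 < d)%N, coprime d p & exists a : int, r * d%:R = a%:~R].

Lemma PI_int p (a : int) : PI p a%:~R.
Proof. by exists 1%N; split => //; [exact: coprime1n | exists a; rewrite mulr1]. Qed.

Lemma PI_nat p (n : nat) : PI p n%:R.
Proof. by have := PI_int p n; rewrite pmulrn. Qed.

Lemma PI_add p r s : PI p r -> PI p s -> PI p (r + s).
Proof.
move=> [d1 [h1 c1 [a1 e1]]] [d2 [h2 c2 [a2 e2]]].
exists (d1 * d2)%N; split; first by rewrite muln_gt0 h1.
  by rewrite coprimeMl c1.
exists (a1 * d2%:Z + a2 * d1%:Z); rewrite natrM mulrDl intrD !intrM -e1 -e2.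
by rewrite !pmulrn; ring.
Qed.

Lemma PI_mul p r s : PI p r -> PI p s -> PI p (r * s).
Proof.
move=> [d1 [h1 c1 [a1 e1]]] [d2 [h2 c2 [a2 e2]]].
exists (d1 * d2)%N; split; first by rewrite muln_gt0 h1.
  by rewrite coprimeMl c1.
exists (a1 * a2); rewrite natrM intrM -e1 -e2; ring.
Qed.

Lemma PI_opp p r : PI p r -> PI p (- r).
Proof.
move=> [d [h c [a e]]]; exists d; split => //; exists (- a).
by rewrite mulNr e intrN.
Qed.

Lemma PI_inv p n : (0 < n)%N -> coprime n p -> PI p (n%:R^-1).
Proof.
move=> h c; exists n; split => //; exists 1; rewrite mulVf //.
by rewrite pnatr_eq0 -lt0n.
Qed.

Lemma PI_sum p m (F : nat -> rat) : (forall k, (k < m)%N -> PI p (F k)) ->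
  PI p (\sum_(k < m) F k).
Proof.
elim: m => [|m IH] h; first by rewrite big_ord0; apply: (PI_nat p 0).
rewrite big_ord_recr /=; apply: PI_add; last exact: h.
by apply: IH => k hk; apply: h; apply: ltnW.
Qed.

Lemma PI_denq p r : PI p r -> coprime `|denq r| p.
Proof.
move=> [d [h c [a e]]]; apply: coprime_dvdl c.
have e2 : numq r * d%:Z = a * denq r.
  apply: (@intr_inj rat); rewrite !intrM numqE -e; ring.
have : (`|denq r| %| `|numq r| * d)%N.
  have -> : (`|numq r| * d = `|(numq r * d%:Z)%R|)%N by rewrite abszM.
  by rewrite e2 abszM dvdn_mull.
by rewrite Gauss_dvdr // coprime_sym coprime_num_den.
Qed.

Lemma bern_PI p : prime p -> forall k, (k.+2 <= p)%N -> PI p (bernoulli k).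
Proof.
move=> pp k; move: {-2}k (leqnn k); elim: k => [|n IH] k hkn hk.
  by rewrite leqn0 in hkn; rewrite (eqP hkn) bern0; apply: (PI_nat p 1).
case: k hkn hk => [|m] hkn hk; first by rewrite bern0; apply: (PI_nat p 1).
rewrite bern_rec; apply: PI_mul.
  apply: PI_opp; apply: PI_inv => //.
  rewrite coprime_sym prime_coprime //; apply/negP => /(dvdn_leq (ltn0Sn _)).
  by rewrite leqNgt (leq_trans _ hk).
apply: (PI_sum p m.+1 (fun k : nat => ('C(m.+2, k))%:R * bernoulli k)) => k hk'.
apply: PI_mul; first exact: PI_nat.
apply: IH; first by rewrite -ltnS (leq_trans hk' hkn).
by apply: leq_trans hk; rewrite !ltnS ltnW.
Qed.

Lemma ID n : \sum_(k < n.+2) ('C(n.+2, k.+1))%:R * bernoulli k =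
  \sum_(k < n.+2) bernoulli k + 1.
Proof.
elim: n => [|n IH].
  rewrite !big_ord_recr !big_ord0 /= bern0 bern1 !add0r.
  have -> : 'C(2, 1) = 2%N by []. have -> : 'C(2, 2) = 1%N by [].
  by field.
under eq_bigr => k _ do rewrite binS natrD mulrDl.
rewrite big_split /= big_ord_recr /= bin_small // mul0r addr0 IH.
rewrite [\sum_(i < n.+3) ('C(n.+2, i))%:R * _]big_ord_recr /= bern_rec0 binn mul1r add0r.
by rewrite [in RHS]big_ord_recr /=; ring.
Qed.


Theorem mainTheorem15 (p : nat) (hp : prime p) (hp5 : (5 <= p)%N) :
  rat_congr p (\sum_(2 <= j < p - 2) bernoulli j) (- (3%:R / 2%:R)).
Proof.
have [n pn] : exists n, p = n.+2 by exists (p - 2)%N; lia.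
have hn3 : (3 <= n)%N by lia.
have hpn : (p - 2 = n)%N by lia.
rewrite hpn.
have h1 : \sum_(k < n.+1) ('C(n.+2, k.+1))%:R * bernoulli k =
          \sum_(k < n.+1) bernoulli k + 1.
  have := ID n; rewrite !big_ord_recr /= binn mul1r => h.
  apply: (addIr (bernoulli n.+1)); rewrite h; ring.
set X := \sum_(k < n.+1) (('C(n.+2, k.+1) %/ n.+2)%N)%:R * bernoulli k.
have hX : \sum_(k < n.+1) ('C(n.+2, k.+1))%:R * bernoulli k = p%:R * X.
  rewrite /X mulr_sumr; apply: eq_bigr => -[k hk] _ /=.
  rewrite mulrA -natrM pn mulnC divnK // -pn; apply: prime_dvd_bin => //.
  by rewrite pn; lia.
exists X; split.
  apply: PI_denq.
  apply: (PI_sum p n.+1 (fun k : nat => (('C(n.+2, k.+1) %/ n.+2)%N)%:R * bernoulli k)) => k hk.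
  apply: PI_mul; first exact: PI_nat.
  by apply: bern_PI => //; rewrite pn ltnS.
rewrite -hX h1 -(big_mkord xpredT) big_nat_recr //=.
rewrite [\sum_(0 <= i < n) _](big_cat_nat _ (n:=2)) //=; last by lia.
have hodd : odd n.
  by case: (even_prime hp) => h; [lia | move: h; rewrite pn /=; rewrite negbK].
rewrite bern_odd //; last by lia.
have -> : \sum_(0 <= i < 2) bernoulli i = bernoulli 0 + bernoulli 1.
  by rewrite !big_nat_recr //= big_geq // add0r.
rewrite bern0 bern1; by field.
Qed.
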